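(* Let $\mathcal{T}$ be a planar triangulation, $m\in\mathbb{Z}_{\ge0}$, $r\in\mathbb{Z}_{\ge-1}$, and $\mathbf r$ the smoothness distribution with $\mathbf r(\tau)=r$ on interior edges, such that $\mathcal{Q}^{\mathbf r}$ is lower-acyclic. If every interior vertex of $\mathcal{T}$ has at least $r+2$ distinct slopes incident upon it and $m>\frac{3r}{2}$, then for any face $\sigma\in\mathcal{T}_2$, setting the smoothness across every edge of the boundary of $\sigma$ to $-1$ (and keeping $\mathbf r$ on all other interior edges) yields a smoothness distribution $\mathbf s$ for which $\mathcal{Q}^{\mathbf s}$ is lower-acyclic. In particular: (A) if $m\ge2$, $r=1$, and every interior vertex has edges with at least $3$ distinct slopes incident upon it, this holds; (B) if $m\ge4$, $r=2$, and every interior vertex has edges with at least $4$ distinct slopes incident upon it, this holds.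
   Context: $\mathcal{T}$ is a finite planar triangulation of a closed polygonal region $\Omega\subset\mathbb{R}^2$ (possibly not simply connected). An edge or vertex is interior if not contained in $\partial\Omega$; $\mathcal{T}^\circ_1,\mathcal{T}^\circ_0$ denote interior edges and vertices, $\mathcal{T}_2$ the faces. The number of distinct slopes at a vertex is the number of distinct directions among the edges containing it. ${\mathcal{P}}_m$ is the space of real bivariate polynomials of total degree at most $m$; $\langle f\rangle$ is the subspace of ${\mathcal{P}}_m$ of polynomial multiples of $f$ lying in ${\mathcal{P}}_m$. A smoothness distribution is a map $\mathbf{r}:\mathcal{T}^\circ_1\to\mathbb{Z}_{\ge -1}$. For $\tau\in\mathcal{T}^\circ_1$ with vanishing affine-linear form $\ell_\tau$, $\mathfrak{J}^{\mathbf r}_\tau=\langle \ell_\tau^{\mathbf r(\tau)+1}\rangle$ (equal to ${\mathcal{P}}_m$ if $\mathbf r(\tau)=-1$); for $\gamma\in\mathcal{T}^\circ_0$, $\mathfrak{J}^{\mathbf r}_\gamma=\sum_{\tau\ni\gamma}\mathfrak{J}^{\mathbf r}_\tau$. $\mathcal{C}$ is the chain complex $\bigoplus_{\sigma\in\mathcal{T}_2}{\mathcal{P}}_m\to\bigoplus_{\tau\in\mathcal{T}^\circ_1}{\mathcal{P}}_m\to\bigoplus_{\gamma\in\mathcal{T}^\circ_0}{\mathcal{P}}_m$ (degrees $2,1,0$) with cellular boundary maps of $\mathcal{T}$ relative to $\partial\Omega$ (signs $\pm1$ from fixed orientations); $\mathcal{I}^{\mathbf r}$ is the subcomplex $0\to\bigoplus_\tau\mathfrak{J}^{\mathbf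 r}_\tau\to\bigoplus_\gamma\mathfrak{J}^{\mathbf r}_\gamma$; $\mathcal{Q}^{\mathbf r}=\mathcal{C}/\mathcal{I}^{\mathbf r}$, with $H_2(\mathcal{Q}^{\mathbf r})$ the space of piecewise polynomials in ${\mathcal{P}}_m$ that are $C^{\mathbf r(\tau)}$ across each interior edge $\tau$. $\mathcal{Q}^{\mathbf r}$ is lower-acyclic if $H_1(\mathcal{Q}^{\mathbf r})=H_0(\mathcal{Q}^{\mathbf r})=0$. *)

(* Defs.v *)
From HB Require Import structures.
From mathcomp Require Import all_boot all_order all_algebra.
From mathcomp Require Import reals.
From mathcomp Require Import mpoly.

Set Implicit Arguments.
Unset Strict Implicit.
Unset Printing Implicit Defensive.
Import Order.TTheory GRing.Theory Num.Theory.
Local Open Scope ring_scope.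

(* A planar triangulation is given by n vertices 'I_n with positions
   pt : 'I_n -> R * R and a set F of faces (3-element vertex sets). *)
Section Triangulation.
Variables (R : realType) (n : nat) (pt : 'I_n -> R * R) (F : {set {set 'I_n}}).

Definition det2 (u v : R * R) : R := u.1 * v.2 - u.2 * v.1.
Definition vsub (a b : R * R) : R * R := (a.1 - b.1, a.2 - b.2).

(* x lies in the convex hull of the points pt i, i \in S (empty if S = set0) *)
Definition in_hull (S : {set 'I_n}) (x : R * R) : Prop :=
  exists w : 'I_n -> R,
    [/\ forall i, 0 <= w i,
        forall i, i \notin S -> w i = 0,
        \sum_i w i = 1
      & x = (\sum_i w i * (pt i).1, \sum_i w i * (pt i).2)].

(* Geometric (planar) triangulation: nondegenerate triangles, any two
   triangles meet exactly in the hull of their common vertices (a common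
   face or the empty set), and every vertex belongs to some triangle. *)
Definition is_triangulation : Prop :=
  [/\ forall s, s \in F -> #|s| = 3%N /\
        (forall a b c, s = [set a; b; c] ->
           det2 (vsub (pt b) (pt a)) (vsub (pt c) (pt a)) != 0),
      forall s t, s \in F -> t \in F -> forall x,
        (in_hull s x /\ in_hull t x) <-> in_hull (s :&: t) x
    & forall v, exists2 s, s \in F & v \in s].

Definition faces_of (e : {set 'I_n}) : {set {set 'I_n}} :=
  [set s in F | e \subset s].

Definition is_edge (e : {set 'I_n}) : bool :=
  (#|e| == 2%N) && (0 < #|faces_of e|)%N.
(* An edge lies in the boundary of Omega iff it lies in exactly one triangle. *)
Definition boundary_edge (e : {set 'I_n}) : bool :=
  (#|e| == 2%N) && (#|faces_of e| == 1%N).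
Definition interior_edge (e : {set 'I_n}) : bool :=
  (#|e| == 2%N) && (#|faces_of e| == 2%N).
(* A vertex lies in the boundary of Omega iff it lies on a boundary edge. *)
Definition interior_vertex (v : 'I_n) : bool :=
  [forall e : {set 'I_n}, (v \in e) ==> ~~ boundary_edge e].

(* slope of the segment from pt v to pt w (None = vertical) *)
Definition slope (v w : 'I_n) : option R :=
  let dx := (pt w).1 - (pt v).1 in
  if dx == 0 then None else Some (((pt w).2 - (pt v).2) / dx).

Definition nslopes (v : 'I_n) : nat :=
  size (undup [seq slope v w | w <- enum 'I_n & is_edge [set v; w]]).

(* bivariate polynomials; P_m = polynomials of total degree <= m *)
Definition poly2 := {mpoly R[2]}.
Definition inPm (m : nat) (p : poly2) : Prop := (msize p <= m.+1)%N.

(* vanishing affine-linear form of the line through the two vertices of e *)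
Definition ell (e : {set 'I_n}) : poly2 :=
  if enum e is [:: a; b] then
    let a1 := (pt a).1 in let a2 := (pt a).2 in
    let b1 := (pt b).1 in let b2 := (pt b).2 in
    (b2 - a2) *: 'X_ord0 - (b1 - a1) *: 'X_(inord 1)
      + ((b1 - a1) * a2 - (b2 - a2) * a1)%:MP
  else 0.

(* smoothness distribution: values on (interior) edges *)
Definition smoothness := {set 'I_n} -> int.

(* J_tau = < ell_tau ^ (r(tau)+1) > inside P_m *)
Definition Jedge (m : nat) (rr : smoothness) (e : {set 'I_n}) (p : poly2) : Prop :=
  inPm m p /\ exists q : poly2, p = ell e ^+ (absz (rr e + 1)) * q.

(* J_gamma = sum of J_tau over interior edges tau containing gamma *)
Definition Jvert (m : nat) (rr : smoothness) (v : 'I_n) (p : poly2) : Prop :=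
  inPm m p /\ exists f : {set 'I_n} -> poly2,
    (forall e, interior_edge e -> v \in e -> Jedge m rr e (f e)) /\
    p = \sum_(e : {set 'I_n} | interior_edge e && (v \in e)) f e.

(* incidence number [S : T] of the simplicial boundary map, for vertex sets
   ordered by the order of 'I_n: d[v0..vk] = sum_i (-1)^i [v0..^vi..vk] *)
Definition incid (S T : {set 'I_n}) : poly2 :=
  \sum_(w in S | S :\ w == T) (-1) ^+ #|[set u in S | (u < w)%N]|.

(* cellular boundary maps of T relative to the boundary of Omega *)
Definition bd1 (c : {set 'I_n} -> poly2) (v : 'I_n) : poly2 :=
  \sum_(e : {set 'I_n} | interior_edge e) incid e [set v] * c e.
Definition bd2 (d : {set 'I_n} -> poly2) (e : {set 'I_n}) : poly2 :=
  \sum_(s in F) incid s e * d s.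

Definition H0_vanishes (m : nat) (rr : smoothness) : Prop :=
  forall g : 'I_n -> poly2, (forall v, interior_vertex v -> inPm m (g v)) ->
  exists c : {set 'I_n} -> poly2,
    (forall e, interior_edge e -> inPm m (c e)) /\
    (forall v, interior_vertex v -> Jvert m rr v (g v - bd1 c v)).

Definition H1_vanishes (m : nat) (rr : smoothness) : Prop :=
  forall c : {set 'I_n} -> poly2,
    (forall e, interior_edge e -> inPm m (c e)) ->
    (forall v, interior_vertex v -> Jvert m rr v (bd1 c v)) ->
  exists d : {set 'I_n} -> poly2,
    (forall s, s \in F -> inPm m (d s)) /\
    (forall e, interior_edge e -> Jedge m rr e (c e - bd2 d e)).

Definition lower_acyclic (m : nat) (rr : smoothness) : Prop :=
  H1_vanishes m rr /\ H0_vanishes m rr.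

Definition drop_face (r : int) (s : {set 'I_n}) : smoothness :=
  fun e => if e \subset s then -1 else r.

End Triangulation.

(* Main.v *)
Require Import Defs.
From HB Require Import structures.
From mathcomp Require Import all_boot all_order all_algebra.
From mathcomp Require Import reals.
From mathcomp Require Import mpoly.
From mathcomp Require Import ring lra zify.
Import Order.TTheory GRing.Theory Num.Theory.
Local Open Scope ring_scope.
Set Implicit Arguments.
Unset Strict Implicit.
Unset Printing Implicit Defensive.

Section Deg.
Variable R : realType.
Implicit Types p q : poly2 R.

Lemma inPm0 m : inPm m (0 : poly2 R).
Proof. by rewrite /inPm msize0. Qed.

Lemma inPmD m p q : inPm m p -> inPm m q -> inPm m (p + q).
Proof.
rewrite /inPm => hp hq; apply: leq_trans (msizeD_le _ _) _.
by rewrite geq_max hp hq.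
Qed.

Lemma inPmN m p : inPm m p -> inPm m (- p).
Proof. by rewrite /inPm msizeN. Qed.

Lemma inPmB m p q : inPm m p -> inPm m q -> inPm m (p - q).
Proof. by move=> hp hq; apply: inPmD => //; apply: inPmN. Qed.

Lemma inPmZ m c p : inPm m p -> inPm m (c *: p).
Proof. by rewrite /inPm => hp; apply: leq_trans (msizeZ_le _ _) hp. Qed.

Lemma inPm_le k l p : (k <= l)%N -> inPm k p -> inPm l p.
Proof. by rewrite /inPm => hkl hp; apply: leq_trans hp _. Qed.

Lemma inPmM k l p q : inPm k p -> inPm l q -> inPm (k + l) (p * q).
Proof.
rewrite /inPm => hp hq.
have [->|p0] := eqVneq p 0; first by rewrite mul0r msize0.
have [->|q0] := eqVneq q 0; first by rewrite mulr0 msize0.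
rewrite msizeM //.
have h1 : (0 < msize p)%N by rewrite lt0n msize_poly_eq0.
have h2 : (0 < msize q)%N by rewrite lt0n msize_poly_eq0.
move: h1 h2 hp hq; case: (msize p) => // a; case: (msize q) => // b.
rewrite addSn /=; lia.
Qed.

Lemma inPmC c : inPm 0 (c%:MP : poly2 R).
Proof. by rewrite /inPm msizeC; case: (c != 0). Qed.

Lemma inPmX (i : 'I_2) : inPm 1 ('X_i : poly2 R).
Proof. by rewrite /inPm msizeX mdeg1. Qed.

Lemma inPmXn k j p : inPm k p -> inPm (k * j) (p ^+ j).
Proof.
move=> hp; elim: j => [|j ih]; first by rewrite expr0 muln0 -mpolyC1; exact: inPmC.
by rewrite exprS mulnS; apply: inPmM.
Qed.

Lemma inPm_sum m (I : Type) (r : seq I) (P : pred I) (f : I -> poly2 R) :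
  (forall i, P i -> inPm m (f i)) -> inPm m (\sum_(i <- r | P i) f i).
Proof.
move=> h; elim/big_ind: _ => //; [exact: inPm0| exact: inPmD].
Qed.

End Deg.

Section JClosure.
Variables (R : realType) (n : nat) (pt : 'I_n -> R * R) (F : {set {set 'I_n}}).
Variables (m : nat) (rr : smoothness n).
Implicit Types p q : poly2 R.

Lemma Jedge0 e : Jedge pt m rr e 0.
Proof. by split; [exact: inPm0 | exists 0; rewrite mulr0]. Qed.

Lemma JedgeD e p q : Jedge pt m rr e p -> Jedge pt m rr e q -> Jedge pt m rr e (p + q).
Proof.
move=> [hp [p' ep]] [hq [q' eq]]; split; first exact: inPmD.
by exists (p' + q'); rewrite mulrDr ep eq.
Qed.

Lemma JedgeZ e c p : Jedge pt m rr e p -> Jedge pt m rr e (c *: p).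
Proof.
move=> [hp [p' ep]]; split; first exact: inPmZ.
by exists (c *: p'); rewrite ep scalerAr.
Qed.

Lemma Jvert0 v : Jvert pt F m rr v 0.
Proof.
split; first exact: inPm0.
exists (fun _ => 0); split; first by move=> e _ _; exact: Jedge0.
by rewrite big1.
Qed.

Lemma JvertD v p q : Jvert pt F m rr v p -> Jvert pt F m rr v q -> Jvert pt F m rr v (p + q).
Proof.
move=> [hp [f [hf ep]]] [hq [g [hg eq]]]; split; first exact: inPmD.
exists (fun e => f e + g e); split; last by rewrite big_split ep eq.
by move=> e he hv; apply: JedgeD; [apply: hf | apply: hg].
Qed.

Lemma JvertZ v c p : Jvert pt F m rr v p -> Jvert pt F m rr v (c *: p).
Proof.
move=> [hp [f [hf ep]]]; split; first exact: inPmZ.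
exists (fun e => c *: f e); split; last by rewrite ep scaler_sumr.
by move=> e he hv; apply: JedgeZ; apply: hf.
Qed.

Lemma JvertN v p : Jvert pt F m rr v p -> Jvert pt F m rr v (- p).
Proof. by move=> h; rewrite -scaleN1r; apply: JvertZ. Qed.

Lemma JvertB v p q : Jvert pt F m rr v p -> Jvert pt F m rr v q -> Jvert pt F m rr v (p - q).
Proof. by move=> hp hq; apply: JvertD => //; apply: JvertN. Qed.

Lemma Jvert_sum v (I : Type) (r : seq I) (P : pred I) (f : I -> poly2 R) :
  (forall i, P i -> Jvert pt F m rr v (f i)) -> Jvert pt F m rr v (\sum_(i <- r | P i) f i).
Proof.
move=> h; elim/big_ind: _ => //; [exact: Jvert0| exact: JvertD].
Qed.

Lemma Jvert_edge v e p : interior_edge F e -> v \in e -> Jedge pt m rr e p ->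
  Jvert pt F m rr v p.
Proof.
move=> he hv hp; split; first by case: hp.
exists (fun e' => if e' == e then p else 0); split.
  by move=> e' _ _; case: eqP => [->|_] //; exact: Jedge0.
rewrite (bigD1 e) /=; last by rewrite he hv.
rewrite eqxx big1 ?addr0 // => e' /andP[_ /negbTE ->] //.
Qed.

End JClosure.

Section Geo.
Variables (R : realType) (n : nat) (pt : 'I_n -> R * R) (F : {set {set 'I_n}}).

Lemma sum_supp (S : {set 'I_n}) (w f : 'I_n -> R) :
  (forall i, i \notin S -> w i = 0) ->
  \sum_i w i * f i = \sum_(i in S) w i * f i.
Proof.
move=> h; rewrite (bigID (mem S)) /= [X in _ + X]big1 ?addr0 // => i hi.
by rewrite h // mul0r.
Qed.

Lemma sum_set2 (a b : 'I_n) (g : 'I_n -> R) : a != b ->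
  \sum_(i in [set a; b]) g i = g a + g b.
Proof.
move=> ab; by rewrite big_setU1 /= ?big_set1 // ?inE.
Qed.

Lemma hull_pair_det (a b : 'I_n) x : a != b -> in_hull pt [set a; b] x ->
  det2 (vsub (pt b) (pt a)) (vsub x (pt a)) = 0.
Proof.
move=> ab [w [w0 wS w1 ->]].
have h1 := sum_supp (fun i => (pt i).1) wS.
have h2 := sum_supp (fun i => (pt i).2) wS.
have w1' : w a * 1 + w b * 1 = 1.
  rewrite -(sum_set2 (fun i => w i * 1)) // -(@sum_supp _ _ (fun _ => 1)) //.
  by under eq_bigr do rewrite mulr1.
rewrite /det2 /vsub /= h1 h2 !sum_set2 //.
have -> : w a = 1 - w b by rewrite -w1'; ring.
ring.
Qed.

Definition indw (a : 'I_n) (x : R) : 'I_n -> R := fun i => (i == a)%:R * x.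

Lemma sum_indw a x (f : 'I_n -> R) : \sum_i indw a x i * f i = x * f a.
Proof.
rewrite (bigD1 a) //= big1 ?addr0 /indw ?eqxx ?mul1r // => i /negbTE ->.
by rewrite !mul0r.
Qed.

Lemma hull_tri (a b c : 'I_n) (al be ga : R) x :
  a != b -> a != c -> b != c -> 0 <= al -> 0 <= be -> 0 <= ga -> al + be + ga = 1 ->
  x.1 = al * (pt a).1 + be * (pt b).1 + ga * (pt c).1 ->
  x.2 = al * (pt a).2 + be * (pt b).2 + ga * (pt c).2 ->
  in_hull pt [set a; b; c] x.
Proof.
move=> ab ac bc hal hbe hga hs hx1 hx2.
exists (fun i => indw a al i + indw b be i + indw c ga i); split.
- move=> i; rewrite /indw.
  by apply: addr_ge0; [apply: addr_ge0|]; apply: mulr_ge0 => //; rewrite ler0n.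
- move=> i; rewrite !inE /indw => /norP [/norP [/negbTE -> /negbTE ->] /negbTE ->].
  by rewrite !mul0r !addr0.
- under eq_bigr do rewrite -[_ + _]mulr1 !mulrDl.
  by rewrite !big_split /= !sum_indw !mulr1.
- case: x hx1 hx2 => x1 x2 /= -> ->; congr (_, _).
  + under [X in _ = X]eq_bigr do rewrite !mulrDl.
    by rewrite !big_split /= !sum_indw.
  + under [X in _ = X]eq_bigr do rewrite !mulrDl.
    by rewrite !big_split /= !sum_indw.
Qed.

End Geo.

Section Geo2.
Variables (R : realType) (n : nat) (pt : 'I_n -> R * R) (F : {set {set 'I_n}}).
Hypothesis tri : is_triangulation pt F.

Lemma card3_ge (a b c : 'I_n) : a != b -> a != c -> b != c -> (2 < #|[set a; b; c]|)%N.
Proof.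
move=> ab ac bc; apply/card_gt2P; exists a, b, c; split; first by rewrite !inE !eqxx ?orbT.
by rewrite ab bc eq_sym ac.
Qed.

Lemma face_card s : s \in F -> #|s| = 3%N.
Proof. by case: tri => h _ _ /h []. Qed.

Lemma face_nondeg (a b c : 'I_n) : [set a; b; c] \in F ->
  det2 (vsub (pt b) (pt a)) (vsub (pt c) (pt a)) != 0.
Proof. by case: tri => h _ _ /h [_ ->]. Qed.

Lemma third_vertex (a b : 'I_n) t : t \in F -> a != b -> [set a; b] \subset t ->
  exists c, [/\ c != a, c != b & t = [set a; b; c]].
Proof.
move=> tF ab sub.
have /subsetPn [c ct cab] : ~~ (t \subset [set a; b]).
  apply/negP => /subset_leq_card; rewrite face_card // cards2 ab //.
move: cab; rewrite !inE => /norP [ca cb]; exists c; split => //.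
apply/eqP; rewrite eq_sym eqEcard face_card //; apply/andP; split.
  apply/subsetP => y; rewrite !inE => /orP [/orP [] | ] /eqP -> //;
   by apply: (subsetP sub); rewrite !inE eqxx ?orbT.
by apply: card3_ge => //; rewrite eq_sym.
Qed.

Lemma same_side_false (a b c1 c2 : 'I_n) :
  [set a; b; c1] \in F -> [set a; b; c2] \in F ->
  a != b -> c1 != a -> c1 != b -> c2 != a -> c2 != b -> c1 != c2 ->
  0 < det2 (vsub (pt b) (pt a)) (vsub (pt c1) (pt a)) *
      det2 (vsub (pt b) (pt a)) (vsub (pt c2) (pt a)) -> False.
Proof.
move=> t1F t2F ab c1a c1b c2a c2b c12.
set D1 := det2 _ _; set D2 := det2 _ (vsub (pt c2) _) => hD.
have D2n0 : D2 != 0 by apply/eqP => h; move: hD; rewrite h mulr0 ltxx.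
have D1n0 : D1 != 0 by apply/eqP => h; move: hD; rewrite h mul0r ltxx.
set E := det2 (vsub (pt c1) (pt a)) (vsub (pt c2) (pt a)).
set p := E / D2; set q := D1 / D2.
have qD : q * D2 = D1 by rewrite /q divfK.
have q0 : 0 < q.
  have hD2 : 0 < D2 * D2 by rewrite -expr2 exprn_even_gt0.
  rewrite -qD in hD; nra.
set K := 1 + `|p| + q.
have K0 : 0 < K by rewrite /K; have := normr_ge0 p; lra.
set eps := 1 / (4 * K).
have epsK : eps * K = 1 / 4 by rewrite /eps; field; rewrite ?gt_eqF.
have eps0 : 0 < eps by rewrite /eps divr_gt0 // mulr_gt0.
have pabs := normr_ge0 p.
have hp1 : - `|p| <= p by rewrite lerNl ler_normr lexx orbT.
have hp2 : p <= `|p| by rewrite ler_norm.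
have e1 : eps <= 1/4 by rewrite /K in epsK; nra.
have e2 : eps * `|p| <= 1/4 by rewrite /K in epsK; nra.
have e3 : eps * q <= 1/4 by rewrite /K in epsK; nra.
have e4 : - (1/4) <= eps * p by nra.
have e5 : eps * p <= 1/4 by nra.
have e6 : 0 <= eps * q by nra.
set al := (1 - eps) / 2.
set x := ((pt a).1 + al * (vsub (pt b) (pt a)).1 + eps * (vsub (pt c1) (pt a)).1,
          (pt a).2 + al * (vsub (pt b) (pt a)).2 + eps * (vsub (pt c1) (pt a)).2).
have h1 : in_hull pt [set a; b; c1] x.
  apply: (@hull_tri _ _ _ _ _ _ al al eps); rewrite ?(eq_sym a) //;
    rewrite /x /al /vsub /=; try lra; try field; by rewrite eq_sym.
have h2 : in_hull pt [set a; b; c2] x.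
  apply: (@hull_tri _ _ _ _ _ _ (1 - (al + eps * p) - eps * q) (al + eps * p) (eps * q));
    rewrite ?(eq_sym a) //; rewrite /al; try lra; try (by rewrite eq_sym);
  rewrite /x /al /p /q /E /D1 /D2 /vsub /det2 /=; field; exact: D2n0.
have := tri; case => _ hull _.
have := (hull _ _ t1F t2F x).1 (conj h1 h2).
have -> : [set a; b; c1] :&: [set a; b; c2] = [set a; b].
  apply/setP => y; rewrite !inE.
  have [->|ya] := eqVneq y a; first by [].
  have [->|yb] := eqVneq y b; first by rewrite !orbT.
  rewrite /=; apply/andP => -[/eqP y1 /eqP y2]; move: c12; rewrite -y1 -y2 eqxx //.
move/(hull_pair_det ab).
have -> : det2 (vsub (pt b) (pt a)) (vsub x (pt a)) = eps * D1.
  by rewrite /x /D1 /det2 /vsub /al /=; ring.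
by apply/eqP; rewrite mulf_neq0 // gt_eqF.
Qed.

End Geo2.

Section Geo3.
Variables (R : realType) (n : nat) (pt : 'I_n -> R * R) (F : {set {set 'I_n}}).
Hypothesis tri : is_triangulation pt F.

Lemma faces_le2 (e : {set 'I_n}) : #|e| = 2%N -> (#|faces_of F e| <= 2)%N.
Proof.
move=> /eqP /cards2P [a [b [ab ->]]].
rewrite leqNgt; apply/negP => /card_gt2P [t1 [t2 [t3 [[h1 h2 h3] [n12 n23 n31]]]]].
move: h1 h2 h3; rewrite !inE => /andP [t1F s1] /andP [t2F s2] /andP [t3F s3].
have [c1 [c1a c1b et1]] := third_vertex tri t1F ab s1.
have [c2 [c2a c2b et2]] := third_vertex tri t2F ab s2.
have [c3 [c3a c3b et3]] := third_vertex tri t3F ab s3.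
subst t1 t2 t3.
have c12 : c1 != c2 by apply: contraNneq n12 => ->.
have c23 : c2 != c3 by apply: contraNneq n23 => ->.
have c31 : c3 != c1 by apply: contraNneq n31 => ->.
have D1 := face_nondeg tri t1F; have D2 := face_nondeg tri t2F;
have D3 := face_nondeg tri t3F.
move: D1 D2 D3.
set d1 := det2 _ (vsub (pt c1) _); set d2 := det2 _ (vsub (pt c2) _);
set d3 := det2 _ (vsub (pt c3) _) => D1 D2 D3.
have P12 := @same_side_false _ _ _ _ tri _ _ _ _ t1F t2F ab c1a c1b c2a c2b c12.
have P23 := @same_side_false _ _ _ _ tri _ _ _ _ t2F t3F ab c2a c2b c3a c3b c23.
have c13 : c1 != c3 by rewrite eq_sym.
have P13 := @same_side_false _ _ _ _ tri _ _ _ _ t1F t3F ab c1a c1b c3a c3b c13.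
rewrite -/d1 -/d2 -/d3 in P12 P23 P13.
have q1 : 0 < d1 * d1 by rewrite -expr2 exprn_even_gt0.
have [h12|h12] := ltP 0 (d1 * d2); first exact: P12.
have [h13|h13] := ltP 0 (d1 * d3); first exact: P13.
have [h23|h23] := ltP 0 (d2 * d3); first exact: P23.
have : d1 * d2 != 0 by rewrite mulf_neq0.
have : d1 * d3 != 0 by rewrite mulf_neq0.
have : d2 * d3 != 0 by rewrite mulf_neq0.
move=> /eqP n1 /eqP n2 /eqP n3.
have l12 : d1 * d2 < 0 by rewrite lt_neqAle h12 andbT; apply/eqP.
have l13 : d1 * d3 < 0 by rewrite lt_neqAle h13 andbT; apply/eqP.
have l23 : d2 * d3 < 0 by rewrite lt_neqAle h23 andbT; apply/eqP.
nra.
Qed.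

Lemma edge_interior v (e : {set 'I_n}) : interior_vertex F v -> v \in e -> is_edge F e ->
  interior_edge F e.
Proof.
move=> /forallP /(_ e) iv ve /andP [/eqP c2 f0].
move: iv; rewrite ve /= /boundary_edge c2 eqxx /= => f1.
rewrite /interior_edge c2 eqxx /=.
have := faces_le2 c2; move: f0 f1; case: #|faces_of F e| => [|[|[|k]]] //.
Qed.

Lemma face_edge (s e : {set 'I_n}) : s \in F -> e \subset s -> #|e| = 2%N -> is_edge F e.
Proof.
move=> sF es c2; rewrite /is_edge c2 eqxx /=; apply/card_gt0P; exists s.
by rewrite inE sF es.
Qed.

End Geo3.

Section Interp.
Variable R : realType.

Lemma dual_basis N (a : 'I_N -> R) : injective a -> forall k : 'I_N,
  exists kap : 'I_N -> R, forall i : 'I_N, \sum_j kap j * a j ^+ i = (i == k)%:R.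
Proof.
move=> ainj k.
pose V : 'M[R]_N := Vandermonde N (\row_j a j).
have uV : V \in unitmx.
  rewrite unitmxE unitfE det_Vandermonde; apply/prodf_neq0 => i _.
  apply/prodf_neq0 => j ij; rewrite !mxE subr_eq0; apply/eqP => /ainj eij.
  by move: ij; rewrite eij ltnn.
pose e : 'cV[R]_N := delta_mx k 0.
exists (fun j => (invmx V *m e) j 0) => i.
set w := invmx V *m e.
have : (V *m w) i 0 = e i 0 by rewrite /w mulmxA mulmxV // mul1mx.
rewrite !mxE eqxx andbT => <-.
by apply: eq_bigr => j _; rewrite !mxE mulrC.
Qed.

Lemma interp (S : poly2 R -> Prop) (S0 : S 0)
  (SD : forall p q, S p -> S q -> S (p + q)) (SZ : forall c p, S p -> S (c *: p))
  N (a : 'I_N -> R) (ainj : injective a) (c : 'I_N -> poly2 R) :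
  (forall j, S (\sum_(i < N) a j ^+ i *: c i)) -> forall k, S (c k).
Proof.
move=> hS k; have [kap hk] := dual_basis ainj k.
have -> : c k = \sum_j kap j *: \sum_(i < N) a j ^+ i *: c i.
  have -> : \sum_j kap j *: \sum_(i < N) a j ^+ i *: c i =
            \sum_(i < N) (\sum_j kap j * a j ^+ i) *: c i.
    under eq_bigr do rewrite scaler_sumr.
    rewrite exchange_big; apply: eq_bigr => i _; rewrite scaler_suml.
    by apply: eq_bigr => j _; rewrite scalerA.
  under eq_bigr do rewrite hk.
  rewrite (bigD1 k) //= eqxx scale1r big1 ?addr0 // => i /negbTE ->.
  by rewrite scale0r.
by apply: (big_ind S) => // j _; apply: SZ.
Qed.

End Interp.

Section Affine.
Variables (R : realType) (n : nat) (pt : 'I_n -> R * R).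

Definition X0 : poly2 R := 'X_ord0.
Definition X1 : poly2 R := 'X_(inord 1).

Definition Lline (u v : R * R) : poly2 R :=
  (v.2 - u.2)%:MP * X0 - (v.1 - u.1)%:MP * X1 + ((v.1 - u.1) * u.2 - (v.2 - u.2) * u.1)%:MP.

Lemma Lline_swap u v : Lline v u = - Lline u v.
Proof. rewrite /Lline; ring. Qed.

Lemma inPm_Lline u v : inPm 1 (Lline u v).
Proof.
rewrite /Lline; apply: inPmD; first apply: inPmB.
- have := inPmM (inPmC (v.2 - u.2)) (@inPmX R ord0); rewrite add0n; exact.
- have := inPmM (inPmC (v.1 - u.1)) (@inPmX R (inord 1)); rewrite add0n; exact.
- by apply: (inPm_le (leq0n 1)); exact: inPmC.
Qed.

Lemma inPmX0 : inPm 1 X0. Proof. exact: (@inPmX R). Qed.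
Lemma inPmX1 : inPm 1 X1. Proof. exact: (@inPmX R). Qed.

Lemma bary1 (a b c : R * R) :
  Lline b c + Lline c a + Lline a b = (det2 (vsub a b) (vsub c b))%:MP.
Proof. rewrite /Lline /det2 /vsub /=; ring. Qed.

Lemma baryX0 (a b c : R * R) :
  a.1%:MP * Lline b c + b.1%:MP * Lline c a + c.1%:MP * Lline a b =
  (det2 (vsub a b) (vsub c b))%:MP * X0.
Proof. rewrite /Lline /det2 /vsub /=; ring. Qed.

Lemma baryX1 (a b c : R * R) :
  a.2%:MP * Lline b c + b.2%:MP * Lline c a + c.2%:MP * Lline a b =
  (det2 (vsub a b) (vsub c b))%:MP * X1.
Proof. rewrite /Lline /det2 /vsub /=; ring. Qed.

Lemma Lline_decomp (a b c w : R * R) :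
  (det2 (vsub b a) (vsub c a))%:MP * Lline a w =
  (det2 (vsub w a) (vsub c a))%:MP * Lline a b + (det2 (vsub b a) (vsub w a))%:MP * Lline a c.
Proof. rewrite /Lline /det2 /vsub /=; ring. Qed.

Lemma ell_set2 (i j : 'I_n) : i != j ->
  ell pt [set i; j] = Lline (pt i) (pt j) \/ ell pt [set i; j] = Lline (pt j) (pt i).
Proof.
move=> ij; rewrite /ell.
have hs : size (enum [set i; j]) = 2%N by rewrite -cardE cards2 ij.
have hu := enum_uniq (mem [set i; j]).
have hm : forall x, (x \in enum [set i; j]) = (x == i) || (x == j).
  by move=> x; rewrite mem_enum !inE.
case E: (enum [set i; j]) hs hu hm => [|x [|y [|z l]]] // _.
rewrite /= inE andbT => xy hm.
have hx : (x == i) || (x == j) by rewrite -hm !inE eqxx.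
have hy : (y == i) || (y == j) by rewrite -hm !inE eqxx orbT.
rewrite -!mul_mpolyC.
have [exi|nxi] := eqVneq x i.
  subst x; left; have [eyj|nyj] := eqVneq y j; first by subst y; rewrite /Lline.
  by move: hy; rewrite (negbTE nyj) orbF => /eqP eyi; move: xy; rewrite eyi eqxx.
move: hx; rewrite (negbTE nxi) /= => /eqP exj; subst x.
have [eyi|nyi] := eqVneq y i; first by subst y; right; rewrite /Lline.
by move: hy; rewrite (negbTE nyi) /= => /eqP eyj; move: xy; rewrite eyj eqxx.
Qed.

Lemma Lline_ell (i j : 'I_n) : i != j ->
  exists eps : R, eps * eps = 1 /\ Lline (pt i) (pt j) = eps%:MP * ell pt [set i; j].
Proof.
move=> ij; have [->|->] := ell_set2 ij.
  by exists 1; rewrite mulr1 mpolyC1 mul1r.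
exists (-1); rewrite mulrNN mulr1; split => //.
by rewrite Lline_swap mpolyCN mpolyC1 mulN1r.
Qed.

End Affine.

Section SeqLemmas.
Variables (T U V : eqType).

Lemma undup_split (f : T -> U) (P : pred T) l :
  (size (undup (map f l)) <=
   size (undup (map f (filter P l))) + size (undup (map f (filter (predC P) l))))%N.
Proof.
rewrite -size_cat; apply: uniq_leq_size; first exact: undup_uniq.
move=> y; rewrite mem_undup mem_cat !mem_undup => /mapP [x xl ->].
by case Px: (P x); [apply/orP; left | apply/orP; right];
  apply: map_f; rewrite mem_filter ?Px //= Px.
Qed.

Lemma undup_const (f : T -> U) l y0 : (forall x, x \in l -> f x = y0) ->
  (size (undup (map f l)) <= 1)%N.
Proof.
move=> h; apply: (@uniq_leq_size _ _ [:: y0]); first exact: undup_uniq.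
by move=> y; rewrite mem_undup => /mapP [x xl ->]; rewrite h // inE.
Qed.

Lemma undup_mono (f : T -> U) (g : T -> V) l :
  (forall x y, x \in l -> y \in l -> g x = g y -> f x = f y) ->
  (size (undup (map f l)) <= size (undup (map g l)))%N.
Proof.
elim: l => [|x l ih] h //=.
have ih' : (size (undup (map f l)) <= size (undup (map g l)))%N.
  by apply: ih => u v ul vl; apply: h; rewrite inE ?ul ?vl orbT.
case: ifP => fx.
  by apply: leq_trans ih' _; case: ifP => //= _; apply: leqnSn.
case: ifP => gx /=; last by rewrite ltnS.
move/mapP: gx => [y yl gxy]; move: fx; rewrite (h x y) ?inE ?eqxx ?yl ?orbT //.
by rewrite map_f.
Qed.

End SeqLemmas.

Section Slopes.
Variables (R : realType) (n : nat) (pt : 'I_n -> R * R) (F : {set {set 'I_n}}).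
Hypothesis tri : is_triangulation pt F.

Lemma slope_eq_aux (x y x' y' : R) : (x != 0) || (y != 0) -> (x' != 0) || (y' != 0) ->
  x * y' - y * x' = 0 ->
  (if x == 0 then None else Some (y / x)) = (if x' == 0 then None else Some (y' / x')).
Proof.
move=> h h' e.
have [x0|x0] := eqVneq x 0.
  move: h; rewrite x0 eqxx /= => y0.
  have [//|x'0] := eqVneq x' 0.
  by move/eqP: e; rewrite x0 mul0r sub0r oppr_eq0 mulf_eq0 (negbTE y0) (negbTE x'0).
have [x'0|x'0] := eqVneq x' 0.
  move: h'; rewrite x'0 eqxx /= => y'0.
  by move/eqP: e; rewrite x'0 mulr0 subr0 mulf_eq0 (negbTE y'0) (negbTE x0).
congr Some; apply/eqP; rewrite eqr_div //; apply/eqP.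
by move/eqP: e; rewrite subr_eq0 => /eqP e; rewrite -e mulrC.
Qed.

Lemma edge_neq a w : is_edge F [set a; w] -> a != w.
Proof. by case/andP; rewrite cards2; case: (a != w). Qed.

Lemma edge_nonzero a w : is_edge F [set a; w] ->
  ((pt w).1 - (pt a).1 != 0) || ((pt w).2 - (pt a).2 != 0).
Proof.
move=> he; have aw := edge_neq he.
case/andP: he => _ /card_gt0P [t]; rewrite inE => /andP [tF sub].
have [c [ca cw et]] := third_vertex tri tF aw sub.
move: tF; rewrite et => tF; have := face_nondeg tri tF.
rewrite -negb_and; apply: contra => /andP [/eqP h1 /eqP h2].
by rewrite /det2 /vsub /= h1 h2 !mul0r subrr.
Qed.

Lemma slope_par a w w' : is_edge F [set a; w] -> is_edge F [set a; w'] ->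
  det2 (vsub (pt w) (pt a)) (vsub (pt w') (pt a)) = 0 ->
  slope pt a w = slope pt a w'.
Proof.
move=> hw hw' e; rewrite /slope; apply: slope_eq_aux.
- exact: edge_nonzero hw.
- exact: edge_nonzero hw'.
- by move: e; rewrite /det2 /vsub /=.
Qed.

End Slopes.

Section TS.
Variables (R : realType) (n : nat) (pt : 'I_n -> R * R) (F : {set {set 'I_n}}).
Hypothesis tri : is_triangulation pt F.

Lemma plucker (b c w w' : R * R) :
  det2 b w * det2 w' c - det2 b w' * det2 w c = - (det2 b c * det2 w w').
Proof. rewrite /det2; ring. Qed.

Lemma sub_set2_3 (a b c : 'I_n) : [set a; c] \subset [set a; b; c].
Proof. by apply/subsetP => x; rewrite !inE => /orP [] ->; rewrite ?orbT. Qed.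

Lemma sub_set2_3' (a b c : 'I_n) : [set a; b] \subset [set a; b; c].
Proof. by apply/subsetP => x; rewrite !inE => /orP [] ->; rewrite ?orbT. Qed.

Lemma ts_exists (a b c : 'I_n) s : [set a; b; c] \in F -> a != b -> a != c -> b != c ->
  (s.+1 <= nslopes pt F a)%N ->
  exists ts : seq R, [/\ uniq ts, (s <= size ts)%N &
    forall t, t \in ts -> exists w, [/\ is_edge F [set a; w],
      det2 (vsub (pt w) (pt a)) (vsub (pt c) (pt a)) != 0 &
      t = det2 (vsub (pt b) (pt a)) (vsub (pt w) (pt a)) /
          det2 (vsub (pt w) (pt a)) (vsub (pt c) (pt a))]].
Proof.
move=> sF ab ac bc hs.
set K := [seq w <- enum 'I_n | is_edge F [set a; w]].
have hn : nslopes pt F a = size (undup (map (slope pt a) K)) by [].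
set P := fun w => det2 (vsub (pt w) (pt a)) (vsub (pt c) (pt a)) != 0.
set tw := fun w => det2 (vsub (pt b) (pt a)) (vsub (pt w) (pt a)) /
          det2 (vsub (pt w) (pt a)) (vsub (pt c) (pt a)).
exists (undup (map tw (filter P K))); split; first exact: undup_uniq.
  have ec : is_edge F [set a; c].
    by apply: (face_edge sF (sub_set2_3 a b c)); rewrite cards2 ac.
  have Dbc := face_nondeg tri sF.
  have h1 := undup_split (slope pt a) P K.
  have h2 : (size (undup (map (slope pt a) (filter (predC P) K))) <= 1)%N.
    apply: (@undup_const _ _ _ _ (slope pt a c)) => w.
    rewrite mem_filter /= mem_filter => /andP [/negPn Pw /andP [ew _]].
    exact: (slope_par tri ew ec (eqP Pw)).
  have h3 : (size (undup (map (slope pt a) (filter P K))) <=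
             size (undup (map tw (filter P K))))%N.
    apply: undup_mono => w w'; rewrite !mem_filter => /andP [Pw /andP [ew _]]
       /andP [Pw' /andP [ew' _]] e.
    apply: (slope_par tri ew ew').
    move: e; rewrite /tw => /eqP; rewrite eqr_div // => /eqP e.
    have := plucker (vsub (pt b) (pt a)) (vsub (pt c) (pt a)) (vsub (pt w) (pt a))
       (vsub (pt w') (pt a)).
    rewrite e subrr => /esym /eqP; rewrite oppr_eq0 mulf_eq0 (negbTE Dbc) /=.
    by move/eqP.
  move: hs; rewrite hn => hs.
  have := leq_trans hs (leq_trans h1 (leq_add h3 h2)).
  by rewrite addn1 ltnS.
move=> t; rewrite mem_undup => /mapP [w]; rewrite mem_filter.
move=> /andP [Pw]; rewrite mem_filter => /andP [ew _] ->.
by exists w; split.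
Qed.

End TS.

Lemma Lline_through (R : realType) (a b c w : R * R) :
  det2 (vsub w a) (vsub c a) != 0 ->
  Lline a b + (det2 (vsub b a) (vsub w a) / det2 (vsub w a) (vsub c a)) *: Lline a c =
  (det2 (vsub b a) (vsub c a) / det2 (vsub w a) (vsub c a)) *: Lline a w.
Proof.
set mu := det2 (vsub w a) (vsub c a); set nu := det2 (vsub b a) (vsub w a).
set D := det2 (vsub b a) (vsub c a) => mu0.
have h := Lline_decomp a b c w; rewrite -/mu -/nu -/D in h.
rewrite -!mul_mpolyC.
have -> : (D / mu)%:MP * Lline a w = (mu^-1)%:MP * (D%:MP * Lline a w) by ring.
rewrite h.
have -> : (mu^-1)%:MP * (mu%:MP * Lline a b + nu%:MP * Lline a c) =
   (mu^-1 * mu)%:MP * Lline a b + (nu / mu)%:MP * Lline a c by ring.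
by rewrite mulVf // mpolyC1 mul1r.
Qed.

Section VertexSpan.
Variables (R : realType) (n : nat) (pt : 'I_n -> R * R) (F : {set {set 'I_n}}).
Hypothesis tri : is_triangulation pt F.
Variables (m s : nat) (rr : smoothness n).
Hypothesis hs : forall e, absz (rr e + 1) = s.
Hypothesis sm : (s <= m)%N.

Definition Sa a (p : poly2 R) := forall q, inPm (m - s) q -> Jvert pt F m rr a (p * q).

Lemma Sa0 a : Sa a 0.
Proof. by move=> q _; rewrite mul0r; exact: Jvert0. Qed.

Lemma SaD a p p' : Sa a p -> Sa a p' -> Sa a (p + p').
Proof. by move=> h h' q hq; rewrite mulrDl; apply: JvertD; [apply: h| apply: h']. Qed.

Lemma SaZ a c p : Sa a p -> Sa a (c *: p).
Proof. by move=> h q hq; rewrite -scalerAl; apply: JvertZ; apply: h. Qed.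

Lemma SaN a p : Sa a p -> Sa a (- p).
Proof. by move=> h; rewrite -scaleN1r; apply: SaZ. Qed.

Lemma SaB a p p' : Sa a p -> Sa a p' -> Sa a (p - p').
Proof. by move=> h h'; apply: SaD => //; apply: SaN. Qed.

Lemma Sa_edge a w : interior_vertex F a -> is_edge F [set a; w] ->
  Sa a (Lline (pt a) (pt w) ^+ s).
Proof.
move=> iv ew q hq.
have aw := edge_neq ew.
have ain : a \in [set a; w] by rewrite !inE eqxx.
have ie := edge_interior tri iv ain ew.
have [eps [e2 eL]] := Lline_ell pt aw.
apply: (Jvert_edge ie ain); split.
  have := inPmM (inPmXn s (inPm_Lline (pt a) (pt w))) hq.
  by rewrite mul1n subnKC.
exists ((eps ^+ s)%:MP * q); rewrite hs eL exprMn rmorphXn.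
by rewrite -mulrA mulrCA.
Qed.

Lemma binom_expand (C B : poly2 R) (t : R) :
  (C + t *: B) ^+ s = \sum_(i < s) t ^+ i *: ('C(s, i)%:R *: (C ^+ (s - i) * B ^+ i))
                     + t ^+ s *: B ^+ s.
Proof.
rewrite exprDn big_ord_recr /= subnn expr0 mul1r binn mulr1n exprZn.
congr (_ + _); apply: eq_bigr => i _.
by rewrite exprZn -scalerAr -scaler_nat !scalerA mulrC.
Qed.

Lemma vertex_span (a b c : 'I_n) : [set a; b; c] \in F -> a != b -> a != c -> b != c ->
  interior_vertex F a -> (s.+1 <= nslopes pt F a)%N ->
  forall i, (i <= s)%N ->
  Sa a (Lline (pt a) (pt b) ^+ (s - i) * Lline (pt a) (pt c) ^+ i).
Proof.
move=> sF ab ac bc iv hsl i hi.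
set C := Lline (pt a) (pt b); set B := Lline (pt a) (pt c).
have ec : is_edge F [set a; c].
  by apply: (face_edge sF (sub_set2_3 a b c)); rewrite cards2 ac.
have SB : Sa a (B ^+ s) := Sa_edge iv ec.
move: hi; rewrite leq_eqVlt => /orP [/eqP -> | hi].
  by rewrite subnn expr0 mul1r.
have [ts [uts sts hts]] := ts_exists tri sF ab ac bc hsl.
have St : forall t, t \in ts -> Sa a ((C + t *: B) ^+ s).
  move=> t /hts [w [ew mu0 ->]].
  rewrite /C /B Lline_through // exprZn; apply: SaZ; exact: Sa_edge.
pose cf := fun j : 'I_s => 'C(s, j)%:R *: (C ^+ (s - j) * B ^+ j).
pose ta := fun j : 'I_s => nth 0 ts j.
have tinj : injective ta.
  move=> j k; rewrite /ta => /eqP; rewrite nth_uniq // ?(leq_trans (ltn_ord _) sts) //.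
  by move/eqP/val_inj.
have := @interp R (Sa a) (Sa0 a) (@SaD a) (@SaZ a) s ta tinj cf.
have Hall : forall j, Sa a (\sum_(i0 < s) ta j ^+ i0 *: cf i0).
  move=> j; have tj : ta j \in ts by rewrite /ta mem_nth // (leq_trans (ltn_ord _) sts).
  have := St _ tj; rewrite binom_expand => h.
  have -> : \sum_(i0 < s) ta j ^+ i0 *: cf i0 =
    (\sum_(i0 < s) ta j ^+ i0 *: cf i0 + ta j ^+ s *: B ^+ s) - ta j ^+ s *: B ^+ s.
    by rewrite addrK.
  by apply: SaB => //; apply: SaZ.
move=> /(_ Hall (Ordinal hi)); rewrite /cf /= => h.
have hC : 'C(s, i)%:R != 0 :> R by rewrite pnatr_eq0 -lt0n bin_gt0 ltnW.
by have := SaZ ('C(s, i)%:R^-1) h; rewrite scalerA mulVf // scale1r.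
Qed.

End VertexSpan.

Section Mono.
Variables (R : realType) (n : nat) (pt : 'I_n -> R * R) (F : {set {set 'I_n}}).
Hypothesis tri : is_triangulation pt F.
Variables (m s : nat) (rr : smoothness n).
Hypothesis hs : forall e, absz (rr e + 1) = s.
Hypothesis sm : (s <= m)%N.

Lemma inPm_m1 : inPm 0 (-1 : poly2 R).
Proof. by rewrite -mpolyC1 -mpolyCN; exact: inPmC. Qed.

Lemma mono_a (a b c : 'I_n) : [set a; b; c] \in F -> a != b -> a != c -> b != c ->
  interior_vertex F a -> (s.+1 <= nslopes pt F a)%N ->
  forall i j l (k : R), (i + j + l)%N = m -> (s <= j + l)%N ->
  Jvert pt F m rr a (Lline (pt b) (pt c) ^+ i * Lline (pt c) (pt a) ^+ j *
                     Lline (pt a) (pt b) ^+ l * k%:MP).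
Proof.
move=> sF ab ac bc iv hsl i j l k hm hjl.
set j' := minn j s.
have hj' : (j' <= s)%N by rewrite geq_minr.
have := vertex_span tri hs sm sF ab ac bc iv hsl hj'.
set Lab := Lline (pt a) (pt b); set Lac := Lline (pt a) (pt c); set Lbc := Lline (pt b) (pt c).
move=> S.
pose q := (-1) ^+ j' * Lbc ^+ i * (- Lac) ^+ (j - j') * Lab ^+ (l - (s - j')) * k%:MP.
have hq : inPm (m - s) q.
  apply: (@inPm_le _ (0 * j' + 1 * i + 1 * (j - j') + 1 * (l - (s - j')) + 0)).
    rewrite /j'; lia.
  apply: inPmM; last exact: inPmC.
  apply: inPmM; last exact: inPmXn (inPm_Lline _ _).
  apply: inPmM; last exact: inPmXn (inPmN (inPm_Lline _ _)).
  apply: inPmM; [exact: inPmXn inPm_m1 | exact: inPmXn (inPm_Lline _ _)].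
have := S q hq; congr Jvert.
have ej : j = (j' + (j - j'))%N by rewrite subnKC // geq_minl.
have el : l = ((s - j') + (l - (s - j')))%N by rewrite subnKC //; rewrite /j'; lia.
rewrite {1}ej {1}el !exprD /q (Lline_swap (pt a) (pt c)) -/Lac (exprNn Lac j').
ring.
Qed.

End Mono.

Section Cover.
Variables (R : realType) (n : nat) (pt : 'I_n -> R * R) (F : {set {set 'I_n}}).
Hypothesis tri : is_triangulation pt F.
Variables (m s : nat) (rr : smoothness n).
Hypothesis hs : forall e, absz (rr e + 1) = s.
Hypothesis h3 : (3 * s < 2 * m + 3)%N.
Variables (a b c : 'I_n).
Hypotheses (sF : [set a; b; c] \in F) (ab : a != b) (ac : a != c) (bc : b != c).
Hypotheses (iva : interior_vertex F a) (ivb : interior_vertex F b) (ivc : interior_vertex F c).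
Hypotheses (sla : (s.+1 <= nslopes pt F a)%N) (slb : (s.+1 <= nslopes pt F b)%N)
  (slc : (s.+1 <= nslopes pt F c)%N).

Let sm : (s <= m)%N. Proof. lia. Qed.

Definition La := Lline (pt b) (pt c).
Definition Lb := Lline (pt c) (pt a).
Definition Lc := Lline (pt a) (pt b).

Definition T (p : poly2 R) := exists ua ub uc, [/\ Jvert pt F m rr a ua,
  Jvert pt F m rr b ub, Jvert pt F m rr c uc & p = ua + ub + uc].

Lemma T0 : T 0.
Proof. by exists 0, 0, 0; split; rewrite ?addr0 //; exact: Jvert0. Qed.

Lemma TD p q : T p -> T q -> T (p + q).
Proof.
move=> [ua [ub [uc [h1 h2 h3' ->]]]] [va [vb [vc [k1 k2 k3 ->]]]].
exists (ua + va), (ub + vb), (uc + vc); split; try exact: JvertD.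
ring.
Qed.

Lemma TZ k p : T p -> T (k *: p).
Proof.
move=> [ua [ub [uc [h1 h2 h3' ->]]]].
exists (k *: ua), (k *: ub), (k *: uc); split; try exact: JvertZ.
by rewrite !scalerDr.
Qed.

Lemma Ta u : Jvert pt F m rr a u -> T u.
Proof. by move=> h; exists u, 0, 0; split; rewrite ?addr0 //; exact: Jvert0. Qed.
Lemma Tb u : Jvert pt F m rr b u -> T u.
Proof. by move=> h; exists 0, u, 0; split; rewrite ?addr0 ?add0r //; exact: Jvert0. Qed.
Lemma Tc u : Jvert pt F m rr c u -> T u.
Proof. by move=> h; exists 0, 0, u; split; rewrite ?add0r //; exact: Jvert0. Qed.

Lemma set3_rot : [set b; c; a] = [set a; b; c].
Proof.
by apply/setP => x; rewrite !inE; case: (x == a); case: (x == b); case: (x == c).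
Qed.

Lemma mono_T i j l (k : R) : (i + j + l)%N = m ->
  T (La ^+ i * Lb ^+ j * Lc ^+ l * k%:MP).
Proof.
move=> hm.
have ba : b != a by rewrite eq_sym.
have ca : c != a by rewrite eq_sym.
have cb : c != b by rewrite eq_sym.
have hm1 : (j + l + i)%N = m by lia.
have hm2 : (l + i + j)%N = m by lia.
have [hjl|hjl] := leqP s (j + l).
  by apply: Ta; apply: (mono_a tri hs sm sF ab ac bc iva sla).
have [hil|hil] := leqP s (l + i).
  apply: Tb.
  have sF' : [set b; c; a] \in F by rewrite set3_rot.
  have := mono_a tri hs sm sF' bc ba ca ivb slb k hm1 hil.
  by rewrite /La /Lb /Lc => h; congr Jvert: h; ring.
have [hij|hij] := leqP s (i + j).
  apply: Tc.
  have sF' : [set c; a; b] \in F.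
    suff -> : [set c; a; b] = [set a; b; c] by [].
    by apply/setP => x; rewrite !inE; case: (x == a); case: (x == b); case: (x == c).
  have := mono_a tri hs sm sF' ca cb ab ivc slc k hm2 hij.
  by rewrite /La /Lb /Lc => h; congr Jvert: h; ring.
lia.
Qed.

Let Dv := det2 (vsub (pt a) (pt b)) (vsub (pt c) (pt b)).
Let Dv0 : Dv != 0.
Proof.
have -> : Dv = - det2 (vsub (pt b) (pt a)) (vsub (pt c) (pt a)) by rewrite /Dv /det2 /vsub /=; ring.
by rewrite oppr_eq0; have := face_nondeg tri sF.
Qed.

Lemma comb_gen (X : poly2 R) (x y z : R) :
  x%:MP * La + y%:MP * Lb + z%:MP * Lc = Dv%:MP * X ->
  X = (Dv^-1 * x)%:MP * La + (Dv^-1 * y)%:MP * Lb + (Dv^-1 * z)%:MP * Lc.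
Proof.
move=> h.
have -> : (Dv^-1 * x)%:MP * La + (Dv^-1 * y)%:MP * Lb + (Dv^-1 * z)%:MP * Lc =
  (Dv^-1)%:MP * (x%:MP * La + y%:MP * Lb + z%:MP * Lc) by ring.
rewrite h.
have -> : (Dv^-1)%:MP * (Dv%:MP * X) = (Dv^-1 * Dv)%:MP * X by ring.
by rewrite mulVf // mpolyC1 mul1r.
Qed.

Lemma X0_comb : X0 R = (Dv^-1 * (pt a).1)%:MP * La + (Dv^-1 * (pt b).1)%:MP * Lb +
  (Dv^-1 * (pt c).1)%:MP * Lc.
Proof. by apply: comb_gen; rewrite /La /Lb /Lc baryX0. Qed.

Lemma X1_comb : X1 R = (Dv^-1 * (pt a).2)%:MP * La + (Dv^-1 * (pt b).2)%:MP * Lb +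
  (Dv^-1 * (pt c).2)%:MP * Lc.
Proof. by apply: comb_gen; rewrite /La /Lb /Lc baryX1. Qed.

Lemma one_comb : (1 : poly2 R) = (Dv^-1 * 1)%:MP * La + (Dv^-1 * 1)%:MP * Lb +
  (Dv^-1 * 1)%:MP * Lc.
Proof. by apply: comb_gen; rewrite mulr1 !mpolyC1 !mul1r /La /Lb /Lc bary1. Qed.

Fixpoint G (k : nat) (p : poly2 R) : Prop :=
  if k is k'.+1 then exists (x y z : R) (p' : poly2 R), (G k' p' /\
     p = (x%:MP * La + y%:MP * Lb + z%:MP * Lc) * p')
  else exists c0 : R, p = c0%:MP.

Lemma G_T k : forall i j l p, (i + j + l + k)%N = m -> G k p ->
  T (La ^+ i * Lb ^+ j * Lc ^+ l * p).
Proof.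
elim: k => [|k ih] i j l p hm /=.
  by case=> c0 ->; apply: mono_T; rewrite addn0 in hm.
case=> [x [y [z [p' [hp' ->]]]]].
have -> : La ^+ i * Lb ^+ j * Lc ^+ l * ((x%:MP * La + y%:MP * Lb + z%:MP * Lc) * p') =
  x *: (La ^+ i.+1 * Lb ^+ j * Lc ^+ l * p') + y *: (La ^+ i * Lb ^+ j.+1 * Lc ^+ l * p')
  + z *: (La ^+ i * Lb ^+ j * Lc ^+ l.+1 * p').
  by rewrite !exprS -!mul_mpolyC; ring.
apply: TD; first apply: TD.
- by apply: TZ; apply: ih => //; lia.
- by apply: TZ; apply: ih => //; lia.
- by apply: TZ; apply: ih => //; lia.
Qed.

Lemma G_comb k p (x y z : R) (X : poly2 R) :
  X = x%:MP * La + y%:MP * Lb + z%:MP * Lc -> G k p -> G k.+1 (X * p).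
Proof. by move=> -> h; exists x, y, z, p. Qed.

Lemma G_mono i j d : G (j + i + d) (X0 R ^+ i * X1 R ^+ j).
Proof.
have g0 : G 0 (1 : poly2 R) by exists 1; rewrite mpolyC1.
have g1 : G j (X1 R ^+ j).
  elim: j => [|j ih] //; rewrite exprS; exact: (G_comb X1_comb).
have g2 : G (j + i) (X0 R ^+ i * X1 R ^+ j).
  elim: i => [|i ih]; first by rewrite addn0 expr0 mul1r.
  by rewrite addnS exprS -mulrA; exact: (G_comb X0_comb).
elim: d => [|d ih]; first by rewrite addn0.
by rewrite addnS -[X in G _ X]mul1r; exact: (G_comb one_comb).
Qed.

Lemma mpolyX2 (mon : 'X_{1..2}) :
  'X_[mon] = X0 R ^+ (mon ord0) * X1 R ^+ (mon (inord 1)) :> poly2 R.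
Proof.
rewrite mpolyXE_id big_ord_recl big_ord_recl big_ord0 mulr1.
have -> : lift ord0 (ord0 : 'I_1) = inord 1 by apply: val_inj; rewrite /= inordK.
by [].
Qed.

Lemma mdeg2 (mon : 'X_{1..2}) : mdeg mon = (mon ord0 + mon (inord 1))%N.
Proof.
rewrite mdegE big_ord_recl big_ord_recl big_ord0 addn0.
have -> : lift ord0 (ord0 : 'I_1) = inord 1 by apply: val_inj; rewrite /= inordK.
by [].
Qed.

Lemma T_all p : inPm m p -> T p.
Proof.
move=> hp; rewrite (mpolyE p) big_seq.
apply: (big_ind T T0 TD) => mon hmon; apply: TZ.
have hd := msize_mdeg_lt hmon.
have hdm : (mon ord0 + mon (inord 1) <= m)%N.
  by rewrite -mdeg2; move: hp; rewrite /inPm => hp; have := leq_trans hd hp; rewrite ltnS.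
have gm : G m (X0 R ^+ mon ord0 * X1 R ^+ mon (inord 1)).
  have := G_mono (mon ord0) (mon (inord 1)) (m - (mon (inord 1) + mon ord0)).
  by rewrite subnKC // addnC.
have := @G_T m 0 0 0 _ (add0n m) gm.
by rewrite !expr0 !mul1r -mpolyX2.
Qed.

End Cover.

Section Incid.
Variables (R : realType) (n : nat).

Lemma incid_out (x y v : 'I_n) : v != x -> v != y -> incid R [set x; y] [set v] = 0.
Proof.
move=> vx vy; rewrite /incid big1 // => w /andP [_ /eqP h].
have : v \in [set x; y] :\ w by rewrite h set11.
by rewrite !inE (negbTE vx) (negbTE vy) andbF.
Qed.

Lemma card_lt2 (x y : 'I_n) : x != y ->
  #|[set u in [set x; y] | (u < x)%N]| = (y < x)%N.
Proof.
move=> xy; case: (ltnP y x) => h.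
  have -> : [set u in [set x; y] | (u < x)%N] = [set y]; last by rewrite cards1.
  apply/setP => u; rewrite !inE.
  have [->|ux] := eqVneq u x; first by rewrite ltnn andbF (negbTE xy).
  have [->|uy] := eqVneq u y; first by rewrite h.
  by [].
apply/eqP; rewrite cards_eq0; apply/eqP/setP => u; rewrite !inE.
have [->|ux] := eqVneq u x; first by rewrite ltnn.
have [->|uy] := eqVneq u y; first by rewrite ltnNge h.
by [].
Qed.

Lemma incid_edge (x y : 'I_n) : x != y ->
  incid R [set x; y] [set y] = (-1) ^+ (y < x)%N.
Proof.
move=> xy; rewrite /incid big_mkcondr /= big_setU1 /=; last by rewrite inE.
rewrite big_set1.
have -> : [set x; y] :\ x = [set y].
  apply/setP => u; rewrite !inE; have [->|ux] := eqVneq u x; last by [].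
  by rewrite (negbTE xy).
have -> : ([set x; y] :\ y == [set y]) = false.
  by apply/negbTE/negP => /eqP /setP /(_ y); rewrite !inE eqxx.
by rewrite eqxx addr0 card_lt2.
Qed.

Lemma incid_edge_l (x y : 'I_n) : x != y ->
  incid R [set x; y] [set x] = (-1) ^+ (x < y)%N.
Proof.
move=> xy; have -> : [set x; y] = [set y; x] by apply/setP => u; rewrite !inE orbC.
by apply: incid_edge; rewrite eq_sym.
Qed.

Lemma incid_sq (x y : 'I_n) : x != y ->
  incid R [set x; y] [set y] * incid R [set x; y] [set y] = 1.
Proof. by move=> xy; rewrite incid_edge // -exprMn mulrNN mulr1 expr1n. Qed.

Lemma incid_sq_l (x y : 'I_n) : x != y ->
  incid R [set x; y] [set x] * incid R [set x; y] [set x] = 1.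
Proof. by move=> xy; rewrite incid_edge_l // -exprMn mulrNN mulr1 expr1n. Qed.

Lemma incid_prod (x y : 'I_n) : x != y ->
  incid R [set x; y] [set x] * incid R [set x; y] [set y] = -1.
Proof.
move=> xy; rewrite incid_edge // incid_edge_l // -exprD.
case: (ltngtP x y) => h /=; rewrite ?expr1 //.
by move: xy; rewrite (val_inj h) eqxx.
Qed.

Lemma inPm_incid (S T : {set 'I_n}) : inPm 0 (incid R S T).
Proof.
apply: inPm_sum => w _; have := inPmXn #|[set u in S | (u < w)%N]| (@inPm_m1 R).
by rewrite mul0n.
Qed.

End Incid.

Section Bd.
Variables (R : realType) (n : nat) (pt : 'I_n -> R * R) (F : {set {set 'I_n}}).
Variable m : nat.

Lemma inPm_bd1 (c : {set 'I_n} -> poly2 R) v :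
  (forall e, interior_edge F e -> inPm m (c e)) -> inPm m (bd1 F c v).
Proof.
move=> hc; apply: inPm_sum => e he.
by have := inPmM (inPm_incid R e [set v]) (hc e he).
Qed.

Lemma bd1D (c h : {set 'I_n} -> poly2 R) v :
  bd1 F (fun e => c e + h e) v = bd1 F c v + bd1 F h v.
Proof. by rewrite /bd1 -big_split; apply: eq_bigr => e _; rewrite mulrDr. Qed.

Lemma bd1_two (e1 e2 : {set 'I_n}) (h1 h2 : poly2 R) v : e1 != e2 ->
  bd1 F (fun e => if e == e1 then h1 else if e == e2 then h2 else 0) v =
  (if interior_edge F e1 then incid R e1 [set v] * h1 else 0) +
  (if interior_edge F e2 then incid R e2 [set v] * h2 else 0).
Proof.
move=> e12; rewrite /bd1 big_mkcond (bigD1 e1) //= (bigD1 e2) //=.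
rewrite [X in _ + (_ + X)]big1; last first.
  move=> e /andP [ne1 ne2]; rewrite (negbTE ne1) (negbTE ne2) mulr0.
  by case: (interior_edge F e).
rewrite addr0 eqxx (eq_sym e2 e1) (negbTE e12) eqxx //.
by rewrite eq_sym.
Qed.

End Bd.

Section FixRoot.
Variables (R : realType) (n : nat) (pt : 'I_n -> R * R) (F : {set {set 'I_n}}).
Hypothesis tri : is_triangulation pt F.
Variables (m : nat) (rr : smoothness n).
Variables (x y z : 'I_n).
Hypotheses (sF : [set x; y; z] \in F) (xy : x != y) (xz : x != z) (yz : y != z).

Lemma fix_root (c : {set 'I_n} -> poly2 R) (uy uz : poly2 R) :
  (forall e, interior_edge F e -> inPm m (c e)) -> inPm m uy -> inPm m uz ->
  (interior_vertex F y -> Jvert pt F m rr y uy) ->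
  (interior_vertex F z -> Jvert pt F m rr z uz) ->
  (interior_vertex F x -> Jvert pt F m rr x (bd1 F c x + (bd1 F c y - uy) + (bd1 F c z - uz))) ->
  exists h : {set 'I_n} -> poly2 R, [/\ forall e, inPm m (h e),
    forall e : {set 'I_n}, ~~ (e \subset [set x; y; z]) -> h e = 0,
    forall v, interior_vertex F v -> v \in [set x; y; z] ->
      Jvert pt F m rr v (bd1 F (fun e => c e + h e) v)
  & forall v, v \notin [set x; y; z] -> bd1 F h v = 0].
Proof.
move=> hc huy huz hy hz hx.
set e1 := [set x; y]; set e2 := [set x; z].
have e12 : e1 != e2.
  apply/negP => /eqP /setP /(_ y); rewrite !inE eqxx orbT /= => /esym /orP [].
    by rewrite eq_sym (negbTE xy).
  by rewrite (negbTE yz).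
set h1 := - (incid R e1 [set y] * (bd1 F c y - uy)).
set h2 := - (incid R e2 [set z] * (bd1 F c z - uz)).
exists (fun e => if e == e1 then h1 else if e == e2 then h2 else 0); split.
- move=> e; case: ifP => _; last case: ifP => _.
  + apply: inPmN; have := inPmM (inPm_incid R e1 [set y]) (inPmB (inPm_bd1 y hc) huy).
    by [].
  + apply: inPmN; have := inPmM (inPm_incid R e2 [set z]) (inPmB (inPm_bd1 z hc) huz).
    by [].
  + exact: inPm0.
- move=> e he; case: ifP => [/eqP ee|_]; first by move: he; rewrite ee sub_set2_3'.
  case: ifP => [/eqP ee|_] //; move: he; rewrite ee.
  suff -> : [set x; z] \subset [set x; y; z] by [].
  by apply/subsetP => u; rewrite !inE => /orP [] ->; rewrite ?orbT.
- move=> v iv vs; rewrite bd1D bd1_two //.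
  have ex : is_edge F e1 by apply: (face_edge sF (sub_set2_3' x y z)); rewrite cards2 xy.
  have ez : is_edge F e2 by apply: (face_edge sF (sub_set2_3 x y z)); rewrite cards2 xz.
  move: vs; rewrite !inE => /orP [/orP [] | ] /eqP ev; subst v.
  + have i1 : interior_edge F e1 by apply: (edge_interior tri iv _ ex); rewrite !inE eqxx.
    have i2 : interior_edge F e2 by apply: (edge_interior tri iv _ ez); rewrite !inE eqxx.
    rewrite i1 i2 /h1 /h2 !mulrN !mulrA (incid_prod R xy) (incid_prod R xz) !mulN1r !opprK.
    by rewrite addrA; apply: hx.
  + have i1 : interior_edge F e1 by apply: (edge_interior tri iv _ ex); rewrite !inE eqxx orbT.
    rewrite i1 (incid_out R (_ : y != x) yz); last by rewrite eq_sym.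
    rewrite mul0r.
    have -> : (if interior_edge F e2 then 0 else 0) = 0 :> poly2 R by case: ifP.
    rewrite addr0 /h1 mulrN mulrA (incid_sq R xy) mul1r.
    have -> : bd1 F c y + - (bd1 F c y - uy) = uy by ring.
    by apply: hy.
  + have i2 : interior_edge F e2 by apply: (edge_interior tri iv _ ez); rewrite !inE eqxx orbT.
    rewrite i2 (incid_out R (_ : z != x) (_ : z != y)); first last.
      by rewrite eq_sym. by rewrite eq_sym.
    rewrite mul0r.
    have -> : (if interior_edge F e1 then 0 else 0) = 0 :> poly2 R by case: ifP.
    rewrite add0r /h2 mulrN mulrA (incid_sq R xz) mul1r.
    have -> : bd1 F c z + - (bd1 F c z - uz) = uz by ring.
    by apply: hz.
- move=> v; rewrite !inE => /norP [/norP [vx vy] vz].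
  rewrite bd1_two // (incid_out R vx vy) (incid_out R vx vz) !mul0r.
  by case: ifP; case: ifP; rewrite addr0.
Qed.

End FixRoot.

Section Drop.
Variables (R : realType) (n : nat) (pt : 'I_n -> R * R) (F : {set {set 'I_n}}).
Variables (m : nat) (r : int) (sg : {set 'I_n}).

Lemma Jedge_mono (e : {set 'I_n}) (p : poly2 R) : Jedge pt m (fun _ => r) e p -> Jedge pt m (drop_face r sg) e p.
Proof.
move=> [hp [q eq]]; split => //; rewrite /drop_face; case: ifP => _.
  by exists p; rewrite expr0 mul1r.
by exists q.
Qed.

Lemma Jvert_mono v (p : poly2 R) : Jvert pt F m (fun _ => r) v p -> Jvert pt F m (drop_face r sg) v p.
Proof.
move=> [hp [f [hf ep]]]; split => //; exists f; split => // e he hv.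
by apply: Jedge_mono; apply: hf.
Qed.

Lemma Jvert_out v (p : poly2 R) : v \notin sg ->
  Jvert pt F m (drop_face r sg) v p -> Jvert pt F m (fun _ => r) v p.
Proof.
move=> vs [hp [f [hf ep]]]; split => //; exists f; split => // e he hv.
have nes : (e \subset sg) = false.
  by apply/negbTE/negP => /subsetP /(_ v hv); apply/negP.
have [hp' [q eq]] := hf e he hv; split => //; exists q; move: eq.
by rewrite /drop_face nes.
Qed.

Lemma Jedge_in (e : {set 'I_n}) (p : poly2 R) : e \subset sg -> inPm m p -> Jedge pt m (drop_face r sg) e p.
Proof. by move=> es hp; split => //; rewrite /drop_face es; exists p; rewrite expr0 mul1r. Qed.

Lemma H0_drop : H0_vanishes pt F m (fun _ => r) -> H0_vanishes pt F m (drop_face r sg).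
Proof.
move=> h g hg; have [c [hc hJ]] := h g hg; exists c; split => // v iv.
by apply: Jvert_mono; apply: hJ.
Qed.

Lemma H1_drop : H1_vanishes pt F m (fun _ => r) ->
  (forall c : {set 'I_n} -> poly2 R, (forall e, interior_edge F e -> inPm m (c e)) ->
    (forall v, interior_vertex F v -> Jvert pt F m (drop_face r sg) v (bd1 F c v)) ->
    exists h : {set 'I_n} -> poly2 R, [/\ forall e, inPm m (h e),
      forall e : {set 'I_n}, ~~ (e \subset sg) -> h e = 0 &
      forall v, interior_vertex F v -> Jvert pt F m (fun _ => r) v (bd1 F (fun e => c e + h e) v)]) ->
  H1_vanishes pt F m (drop_face r sg).
Proof.
move=> H1 hh c hc hJ.
have [h [h1 h2 h3]] := hh c hc hJ.
have [d [hd hde]] := H1 (fun e => c e + h e) (fun e he => inPmD (hc e he) (h1 e)) h3.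
exists d; split => // e ie.
have := hde e ie; case: (boolP (e \subset sg)) => es.
  move=> [hp _]; apply: Jedge_in => //.
  have -> : c e - bd2 F d e = (c e + h e - bd2 F d e) - h e by ring.
  exact: inPmB.
by rewrite h2 // addr0; apply: Jedge_mono.
Qed.

End Drop.

Section Hexist.
Variables (R : realType) (n : nat) (pt : 'I_n -> R * R) (F : {set {set 'I_n}}).
Hypothesis tri : is_triangulation pt F.
Variables (m : nat) (r : int).
Let s := absz (r + 1).
Hypothesis hsl : forall v, interior_vertex F v -> (s.+1 <= nslopes pt F v)%N.
Hypothesis h3 : (3 * s < 2 * m + 3)%N.

Lemma set3_of (sg : {set 'I_n}) : sg \in F ->
  exists a b c, [/\ a != b, a != c, b != c & sg = [set a; b; c]].
Proof.
move=> sF; have c3 := face_card tri sF.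
have : (2 < #|sg|)%N by rewrite c3.
move=> /card_gt2P [a [b [c [[ha hb hc] [ab bc ca]]]]].
exists a, b, c; split => //; first by rewrite eq_sym.
apply/eqP; rewrite eq_sym eqEcard c3; apply/andP; split.
  by apply/subsetP => u; rewrite !inE => /orP [/orP [] | ] /eqP ->.
by apply: card3_ge => //; rewrite eq_sym.
Qed.

Definition Hgoal (sg : {set 'I_n}) (c : {set 'I_n} -> poly2 R) :=
  exists h : {set 'I_n} -> poly2 R, [/\ forall e, inPm m (h e),
      forall e : {set 'I_n}, ~~ (e \subset sg) -> h e = 0 &
      forall v, interior_vertex F v -> Jvert pt F m (fun _ => r) v (bd1 F (fun e => c e + h e) v)].

Lemma finish (x y z : 'I_n) sg (c : {set 'I_n} -> poly2 R) :
  [set x; y; z] = sg ->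
  (forall v, interior_vertex F v -> Jvert pt F m (drop_face r sg) v (bd1 F c v)) ->
  (exists h : {set 'I_n} -> poly2 R, [/\ forall e, inPm m (h e),
    forall e : {set 'I_n}, ~~ (e \subset [set x; y; z]) -> h e = 0,
    forall v, interior_vertex F v -> v \in [set x; y; z] ->
      Jvert pt F m (fun _ => r) v (bd1 F (fun e => c e + h e) v)
  & forall v, v \notin [set x; y; z] -> bd1 F h v = 0]) -> Hgoal sg c.
Proof.
move=> <- hJ [h [h1 h2 h3' h4]]; exists h; split => // v iv.
case: (boolP (v \in [set x; y; z])) => vs; first exact: h3'.
rewrite bd1D h4 // addr0; apply: (Jvert_out vs); exact: hJ.
Qed.

Lemma root_bdry (x y z : 'I_n) sg (c : {set 'I_n} -> poly2 R) :
  [set x; y; z] = sg -> sg \in F -> x != y -> x != z -> y != z ->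
  ~~ interior_vertex F x ->
  (forall e, interior_edge F e -> inPm m (c e)) ->
  (forall v, interior_vertex F v -> Jvert pt F m (drop_face r sg) v (bd1 F c v)) ->
  Hgoal sg c.
Proof.
move=> es sF xy xz yz ix hc hJ; apply: (finish es hJ).
have sF' : [set x; y; z] \in F by rewrite es.
apply: (fix_root tri sF' xy xz yz hc (inPm0 _ _) (inPm0 _ _)).
- by move=> _; exact: Jvert0.
- by move=> _; exact: Jvert0.
- by move=> ix'; move: ix; rewrite ix'.
Qed.

Lemma all_int (a b c' : 'I_n) (c : {set 'I_n} -> poly2 R) :
  [set a; b; c'] \in F -> a != b -> a != c' -> b != c' ->
  interior_vertex F a -> interior_vertex F b -> interior_vertex F c' ->
  (forall e, interior_edge F e -> inPm m (c e)) ->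
  (forall v, interior_vertex F v -> Jvert pt F m (drop_face r [set a; b; c']) v (bd1 F c v)) ->
  Hgoal [set a; b; c'] c.
Proof.
move=> sF ab ac bc ia ib ic hc hJ; apply: (finish (erefl _) hJ).
have hs : forall e : {set 'I_n}, absz ((fun _ => r) e + 1) = s by [].
have := T_all tri hs h3 sF ab ac bc ia ib ic (hsl ia) (hsl ib) (hsl ic)
  (inPmD (inPmD (inPm_bd1 a hc) (inPm_bd1 b hc)) (inPm_bd1 c' hc)).
move=> [ua [ub [uc [Ja Jb Jc e]]]].
apply: (fix_root tri sF ab ac bc hc (Jb.1) (Jc.1)).
- by move=> _.
- by move=> _.
- move=> _.
  have -> : bd1 F c a + (bd1 F c b - ub) + (bd1 F c c' - uc) = ua.
    by apply/eqP; rewrite -subr_eq0; apply/eqP; move: e => /eqP; rewrite -subr_eq0 => /eqP e;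
      rewrite -[RHS]e; ring.
  exact: Ja.
Qed.

Lemma exists_h (sg : {set 'I_n}) (c : {set 'I_n} -> poly2 R) : sg \in F ->
  (forall e, interior_edge F e -> inPm m (c e)) ->
  (forall v, interior_vertex F v -> Jvert pt F m (drop_face r sg) v (bd1 F c v)) ->
  Hgoal sg c.
Proof.
move=> sF hc hJ.
have [a [b [c' [ab ac bc es]]]] := set3_of sF.
have ba : b != a by rewrite eq_sym.
have ca : c' != a by rewrite eq_sym.
have cb : c' != b by rewrite eq_sym.
case: (boolP (interior_vertex F a)) => ia; last first.
  by apply: (root_bdry (esym es) sF ab ac bc ia hc hJ).
case: (boolP (interior_vertex F b)) => ib; last first.
  have es' : [set b; a; c'] = sg.
    by rewrite es; apply/setP => u; rewrite !inE; case: (u == a); case: (u == b).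
  by apply: (root_bdry es' sF ba bc ac ib hc hJ).
case: (boolP (interior_vertex F c')) => ic; last first.
  have es' : [set c'; a; b] = sg.
    by rewrite es; apply/setP => u; rewrite !inE; case: (u == a); case: (u == b); case: (u == c').
  by apply: (root_bdry es' sF ca cb ab ic hc hJ).
subst sg; exact: all_int.
Qed.

End Hexist.

Unset Implicit Arguments.
Set Strict Implicit.

Lemma main_part (R : realType) (n : nat) (pt : 'I_n -> R * R)
    (F : {set {set 'I_n}}) :
  is_triangulation pt F ->
  (forall (m : nat) (r : int), -1 <= r ->
        lower_acyclic pt F m (fun _ => r) ->
        (forall v, interior_vertex F v -> r + 2 <= (nslopes pt F v)%:Z) ->
        3 * r < 2 * m%:Z ->
        forall s, s \in F -> lower_acyclic pt F m (drop_face r s)).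
Proof.
move=> tri m r hr [H1 H0] hsl hm sg sF; split; last exact: H0_drop.
have hk : ((absz (r + 1))%:Z = r + 1)%R by rewrite gez0_abs // -lerBlDr sub0r.
apply: (H1_drop H1) => c hc hJ.
apply: (exists_h tri) => //.
- move=> v iv; have := hsl v iv; move: hk; set k := absz (r + 1) => hk h.
  have : (k.+1%:Z <= (nslopes pt F v)%:Z)%R by rewrite -[k.+1]addn1 PoszD hk -addrA.
  by rewrite lez_nat.
- move: hk; set k := absz (r + 1) => hk.
  suff : ((3 * k)%:Z < (2 * m + 3)%:Z)%R by rewrite ltz_nat.
  rewrite PoszM hk PoszD PoszM; lia.
Qed.

Theorem mainTheorem6 (R : realType) (n : nat) (pt : 'I_n -> R * R)
    (F : {set {set 'I_n}}) :
  is_triangulation pt F ->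
  [/\ (forall (m : nat) (r : int), -1 <= r ->
        lower_acyclic pt F m (fun _ => r) ->
        (forall v, interior_vertex F v -> r + 2 <= (nslopes pt F v)%:Z) ->
        3 * r < 2 * m%:Z ->
        forall s, s \in F -> lower_acyclic pt F m (drop_face r s)),
      (forall m : nat, (2 <= m)%N ->
        lower_acyclic pt F m (fun _ => 1) ->
        (forall v, interior_vertex F v -> (3 <= nslopes pt F v)%N) ->
        forall s, s \in F -> lower_acyclic pt F m (drop_face 1 s))
    & (forall m : nat, (4 <= m)%N ->
        lower_acyclic pt F m (fun _ => 2) ->
        (forall v, interior_vertex F v -> (4 <= nslopes pt F v)%N) ->
        forall s, s \in F -> lower_acyclic pt F m (drop_face 2 s))].
Proof.
move=> tri; have M := @main_part R n pt F tri; split.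
- exact: M.
- move=> m hm la hs; apply: M => //.
  all: try lia.
- move=> m hm la hs; apply: M => //.
  all: try lia.
Qed.
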